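(* If an equivariant map $f:X\to Y$ of nominal sets is surjective and has orbit-finite fibres, then $f$ is safe.
   Context: Nominal sets over a countably infinite set $\mathcal V$ of names; $\mathsf{supp}(u)$ is the least finite support. An orbit is an equivalence class of $u\sim\pi\cdot u$. $f$ has orbit-finite fibres if each fibre $f^{-1}(v)$ is contained in finitely many orbits of $X$. $u\in X$ is $f$-safe if $|\mathsf{supp}(u)|=\max\{|\mathsf{supp}(v)|:v\in f^{-1}(f(u))\}$ (the maximum existing); $f$ is safe if every element of $Y$ has an $f$-safe preimage. *)

(* Defs.v *)
From Stdlib Require Import List Arith.
Import ListNotations.
Set Implicit Arguments.

Record perm := mkPerm {
  pfun : nat -> nat;
  pinv : nat -> nat;
  pfunK : forall a, pinv (pfun a) = a;
  pinvK : forall a, pfun (pinv a) = a;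
  pfin : exists l : list nat, forall a, ~ In a l -> pfun a = a
}.

Definition pid : perm.
Proof.
  refine (@mkPerm (fun a => a) (fun a => a) (fun a => eq_refl) (fun a => eq_refl) _).
  exists []. intros a _. reflexivity.
Defined.

Definition pcomp (p q : perm) : perm.
Proof.
  refine (@mkPerm (fun a => pfun p (pfun q a)) (fun a => pinv q (pinv p a)) _ _ _).
  - intro a. rewrite pfunK, pfunK. reflexivity.
  - intro a. rewrite pinvK, pinvK. reflexivity.
  - destruct (pfin p) as [lp Hp]. destruct (pfin q) as [lq Hq].
    exists (lp ++ lq). intros a Ha.
    rewrite Hq, Hp; [reflexivity| |]; intro H; apply Ha; apply in_or_app; auto.
Defined.

Definition supports {X : Type} (act : perm -> X -> X) (A : list nat) (x : X) : Prop :=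
  forall p : perm, (forall a, In a A -> pfun p a = a) -> act p x = x.

Record nominal := mkNominal {
  car :> Type;
  act : perm -> car -> car;
  act_id : forall x, act pid x = x;
  act_comp : forall p q x, act p (act q x) = act (pcomp p q) x;
  act_ext : forall p q x, (forall a, pfun p a = pfun q a) -> act p x = act q x;
  fin_supp : forall x : car, exists A : list nat, supports act A x
}.

(** The least finite support: a name belongs to [supp x] iff it belongs to
    every finite support of [x]. *)
Definition in_supp {X : nominal} (x : X) (a : nat) : Prop :=
  forall A : list nat, supports (act X) A x -> In a A.

Definition supp_card {X : nominal} (x : X) (n : nat) : Prop :=
  exists l : list nat, NoDup l /\ (forall a, In a l <-> in_supp x a) /\ length l = n.

Definition equivariant {X Y : nominal} (f : X -> Y) : Prop :=
  forall (p : perm) (x : X), f (act X p x) = act Y p (f x).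

Definition same_orbit {X : nominal} (u v : X) : Prop :=
  exists p : perm, v = act X p u.

Definition surjective {X Y : Type} (f : X -> Y) : Prop :=
  forall y, exists x, f x = y.

Definition orbit_finite_fibres {X Y : nominal} (f : X -> Y) : Prop :=
  forall y : Y, exists us : list X,
    forall w : X, f w = y -> exists u, In u us /\ same_orbit u w.

Definition f_safe {X Y : nominal} (f : X -> Y) (u : X) : Prop :=
  exists n, supp_card u n /\
    forall w m, f w = f u -> supp_card w m -> m <= n.

Definition safe {X Y : nominal} (f : X -> Y) : Prop :=
  forall y : Y, exists u : X, f u = y /\ f_safe f u.

(* Main.v *)
Require Import Defs.
From Stdlib Require Import List Arith Lia FinFun Classical ClassicalEpsilon.
Import ListNotations.
Set Implicit Arguments.

Definition pinvP (p : perm) : perm.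
Proof.
  refine (@mkPerm (pinv p) (pfun p) (pinvK p) (pfunK p) _).
  destruct (pfin p) as [l Hl]. exists l. intros a Ha.
  rewrite <- (Hl a Ha) at 1. apply pfunK.
Defined.

Lemma act_inv (X : nominal) (p : perm) (u : X) : act X (pinvP p) (act X p u) = u.
Proof.
  rewrite act_comp. rewrite <- (act_id X u) at 2. apply act_ext.
  intro a. simpl. apply pfunK.
Qed.

Lemma supports_act (X : nominal) (p : perm) (A : list nat) (u : X) :
  supports (act X) A u -> supports (act X) (map (pfun p) A) (act X p u).
Proof.
  intros HA q Hq.
  set (r := pcomp (pinvP p) (pcomp q p)).
  assert (Hr : act X r u = u).
  { apply HA. intros a Ha. unfold r; simpl.
    rewrite (Hq (pfun p a)) by (apply in_map; auto). apply pfunK. }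
  rewrite act_comp. rewrite <- Hr at 2. rewrite act_comp. apply act_ext.
  intro a. unfold r; simpl. symmetry. apply pinvK.
Qed.

Lemma in_supp_act (X : nominal) (p : perm) (u : X) a :
  in_supp (act X p u) a <-> in_supp u (pinv p a).
Proof.
  split.
  - intros H A HA. apply (@supports_act X p) in HA. apply H in HA.
    apply in_map_iff in HA. destruct HA as [b [<- Hb]]. rewrite pfunK. auto.
  - intros H B HB. apply (@supports_act X (pinvP p)) in HB. rewrite act_inv in HB.
    apply H in HB. apply in_map_iff in HB. destruct HB as [b [Hb HbB]].
    simpl in Hb. assert (b = a).
    { rewrite <- (pinvK p b), <- (pinvK p a). congruence. }
    subst; auto.
Qed.

Lemma supp_card_act (X : nominal) (p : perm) (u : X) n :
  supp_card u n -> supp_card (act X p u) n.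
Proof.
  intros [l [Hnd [Hm Hl]]]. exists (map (pfun p) l). split; [|split].
  - apply FinFun.Injective_map_NoDup; auto.
    intros a b E. rewrite <- (pfunK p a), <- (pfunK p b). congruence.
  - intro a. rewrite in_supp_act, <- Hm. rewrite in_map_iff. split.
    + intros [b [<- Hb]]. rewrite pfunK. auto.
    + intro H. exists (pinv p a). rewrite pinvK. auto.
  - rewrite length_map. auto.
Qed.

Lemma filter_ex (X : nominal) (x : X) (A : list nat) :
  exists l, NoDup l /\ (forall a, In a l <-> In a A /\ in_supp x a).
Proof.
  induction A as [|a A IH].
  - exists []. split. constructor. simpl. tauto.
  - destruct IH as [l [Hnd Hl]].
    destruct (classic (in_supp x a /\ ~ In a l)) as [[H1 H2]|H].
    + exists (a :: l). split. constructor; auto.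
      intro b. simpl. rewrite Hl. split.
      * intros [<-|[? ?]]; auto.
      * intros [[<-|?] ?]; auto.
    + exists l. split; auto. intro b. rewrite Hl. simpl. split.
      * intros [? ?]; auto.
      * intros [[E|?] ?]; [subst b|auto].
        destruct (classic (In a l)) as [?|Hn]; [apply Hl; auto|].
        exfalso; apply H; auto.
Qed.

Lemma supp_card_ex (X : nominal) (x : X) : exists n, supp_card x n.
Proof.
  destruct (fin_supp X x) as [A HA].
  destruct (@filter_ex X x A) as [l [Hnd Hl]].
  exists (length l), l. split; auto. split; auto.
  intro a. rewrite Hl. split; [tauto|]. intro H. split; auto.
Qed.

Lemma supp_card_uniq (X : nominal) (x : X) n m :
  supp_card x n -> supp_card x m -> n = m.
Proof.
  intros [l [Hl [Hml <-]]] [k [Hk [Hmk <-]]].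
  apply Nat.le_antisymm; apply NoDup_incl_length; auto;
    intros a Ha; [apply Hmk, Hml | apply Hml, Hmk]; auto.
Qed.

Definition sc (X : nominal) (x : X) : nat :=
  proj1_sig (constructive_indefinite_description _ (@supp_card_ex X x)).
Arguments sc {X} x.

Lemma sc_spec (X : nominal) (x : X) : supp_card x (sc x).
Proof. unfold sc. destruct constructive_indefinite_description; auto. Qed.

Lemma sc_orbit (X : nominal) (u w : X) : same_orbit u w -> sc w = sc u.
Proof.
  intros [p ->]. eapply supp_card_uniq. apply sc_spec.
  apply supp_card_act, sc_spec.
Qed.

Theorem lemma5p31 (X Y : nominal) (f : X -> Y) :
  equivariant f -> surjective f -> orbit_finite_fibres f -> safe f.
Proof.
  intros _ Hs Ho y.
  destruct (Ho y) as [us Hus]. destruct (Hs y) as [x0 Hx0].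
  assert (Key : forall us x0, f x0 = y ->
    (forall w, f w = y -> (exists u, In u us /\ same_orbit u w) \/ sc w <= sc x0) ->
    exists u0, f u0 = y /\ forall w, f w = y -> sc w <= sc u0).
  { clear us Hus x0 Hx0. induction us as [|u us IH]; intros x0 Hx0 H.
    - exists x0. split; auto. intros w Hw.
      destruct (H w Hw) as [[? [[] _]]|?]; auto.
    - destruct (classic (exists w1, f w1 = y /\ same_orbit u w1)) as [[w1 [Hw1 Ow1]]|Hn].
      + set (x1 := if Nat.leb (sc w1) (sc x0) then x0 else w1).
        assert (Hx1 : f x1 = y /\ sc x0 <= sc x1 /\ sc w1 <= sc x1).
        { unfold x1. destruct (Nat.leb_spec (sc w1) (sc x0)); repeat split; auto; lia. }
        destruct Hx1 as [Hx1 [L0 L1]].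
        apply (IH x1 Hx1). intros w Hw.
        destruct (H w Hw) as [[v [[<-|Hv] Ov]]|Hle].
        * right. rewrite (sc_orbit Ov), <- (sc_orbit Ow1). auto.
        * left. eauto.
        * right. lia.
      + apply (IH x0 Hx0). intros w Hw.
        destruct (H w Hw) as [[v [[<-|Hv] Ov]]|Hle]; eauto.
        exfalso. apply Hn; eauto. }
  destruct (Key us x0 Hx0) as [u0 [Hu0 Hmax]].
  { intros w Hw. left. auto. }
  exists u0. split; auto. exists (sc u0). split. apply sc_spec.
  intros w m Hw Hm. rewrite Hu0 in Hw.
  rewrite (supp_card_uniq Hm (@sc_spec X w)). auto.
Qed.
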